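(* Let $d\geq 2$, let $\mathcal S$ be the set of $d\times d$ density operators, and let $\mathrm d\rho$ be any probability measure on $\mathcal S$. Define $$B_1=1-\tfrac14\,\mathrm{Tr}\big(\mathbb E_\rho[\rho^2]-\mathbb E_\rho[\rho]^2\big),\qquad B_2=\frac1d\left(1+\sqrt{d-1}\,\sqrt{d\left(\mathbb E_\rho\Big[\sqrt{1-\mathrm{Tr}(\rho^2)}\Big]^2+\mathrm{Tr}\big(\mathbb E_\rho[\rho]^2\big)\right)-1}\right).$$ Then either $B_1=1$, or $B_2<B_1$.
   Context: $\mathbb E_\rho$ denotes expectation with respect to $\mathrm d\rho$. ($B_1$ and $B_2$ are both upper bounds on $\max_{\sigma\in\mathcal S}\mathbb E_\rho[F(\rho,\sigma)]$, $F$ being the fidelity.) *)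

(* Defs.v *)
From HB Require Import structures.
From mathcomp Require Import all_boot all_order all_algebra.
From mathcomp Require Import all_classical all_reals all_analysis.
From mathcomp Require Import complex.
Set Implicit Arguments. Unset Strict Implicit. Unset Printing Implicit Defensive.
Import Order.TTheory GRing.Theory Num.Theory.
Local Open Scope ring_scope.

Definition adjmx (R : realType) (m n : nat) (A : 'M[R[i]]_(m, n)) : 'M[R[i]]_(n, m) :=
  (map_mx Num.conj A)^T.

(* Positive semidefinite: v^* A v >= 0 for every vector v (the order on
   R[i] forces the value to be real). *)
Definition psd (R : realType) (d : nat) (A : 'M[R[i]]_d) : Prop :=
  forall v : 'cV[R[i]]_d, 0 <= (adjmx v *m A *m v) 0 0.

Definition density_ops (R : realType) (d : nat) : set 'M[R[i]]_d :=
  [set A | psd A /\ \tr A = 1].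

Definition Ec (R : realType) (dT : measure_display) (T : measurableType dT)
  (P : probability T R) (f : T -> R[i]) : R[i] :=
  Complex (Rintegral P setT (fun t => complex.Re (f t)))
          (Rintegral P setT (fun t => complex.Im (f t))).

Definition Emx (R : realType) (dT : measure_display) (T : measurableType dT)
  (P : probability T R) (d : nat) (F : T -> 'M[R[i]]_d) : 'M[R[i]]_d :=
  \matrix_(i, j) Ec P (fun t => F t i j).

Definition B1 (R : realType) (dT : measure_display) (T : measurableType dT)
  (P : probability T R) (d : nat) (rho : T -> 'M[R[i]]_d) : R[i] :=
  1 - 4%:R^-1 * \tr (Emx P (fun t => rho t *m rho t) - Emx P rho *m Emx P rho).

Definition B2 (R : realType) (dT : measure_display) (T : measurableType dT)
  (P : probability T R) (d : nat) (rho : T -> 'M[R[i]]_d) : R[i] :=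
  d%:R^-1 * (1 + sqrtC (d.-1)%:R *
    sqrtC (d%:R * ((Ec P (fun t => sqrtC (1 - \tr (rho t *m rho t)))) ^+ 2
                   + \tr (Emx P rho *m Emx P rho)) - 1)).

(* Main.v *)
Require Import Defs.
From HB Require Import structures.
From mathcomp Require Import all_boot all_order all_algebra.
From mathcomp Require Import all_classical all_reals all_analysis.
From mathcomp Require Import complex.
From mathcomp Require Import measurable_realfun realfun.
From mathcomp Require Import ring lra.
Import Order.TTheory GRing.Theory Num.Theory.
Local Open Scope ring_scope.
Set Implicit Arguments. Unset Strict Implicit.

Definition good (R : realType) (dT : measure_display) (T : measurableType dT)
  (f : T -> R) : Prop :=
  measurable_fun setT f /\ exists M : R, forall t, `|f t| <= M.

Lemma good_int (R : realType) (dT : measure_display) (T : measurableType dT)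
  (P : probability T R) (f : T -> R) : good f -> P.-integrable setT (EFin \o f).
Proof.
move=> [mf [M hM]]; apply: measurable_bounded_integrable => //.
  exact: (le_lt_trans (probability_le1 P measurableT) (ltry _)).
exists M; split; first by rewrite num_real.
move=> N hN x _; apply: le_trans (hM x) _; exact: ltW.
Qed.

Lemma good_cst (R : realType) (dT : measure_display) (T : measurableType dT) (c : R) :
  good (fun _ : T => c).
Proof. by split; [exact: measurable_cst | exists `|c|]. Qed.

Lemma good_add (R : realType) (dT : measure_display) (T : measurableType dT) (f g : T -> R) :
  good f -> good g -> good (fun t => f t + g t).
Proof.
move=> [mf [M hM]] [mg [N hN]]; split; first exact: measurable_funD.
exists (M + N) => t; apply: le_trans (ler_normD _ _) _; exact: lerD.
Qed.

Lemma good_opp (R : realType) (dT : measure_display) (T : measurableType dT) (f : T -> R) :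
  good f -> good (fun t => - f t).
Proof.
move=> [mf [M hM]]; split; first exact: measurableT_comp.
by exists M => t; rewrite normrN.
Qed.

Lemma good_mul (R : realType) (dT : measure_display) (T : measurableType dT) (f g : T -> R) :
  good f -> good g -> good (fun t => f t * g t).
Proof.
move=> [mf [M hM]] [mg [N hN]]; split; first exact: measurable_funM.
exists (M * N) => t; rewrite normrM; apply: ler_pM => //.
Qed.

Lemma good_sum (R : realType) (dT : measure_display) (T : measurableType dT)
  (I : Type) (r : seq I) (Q : pred I) (f : I -> T -> R) :
  (forall i, Q i -> good (f i)) -> good (fun t => \sum_(i <- r | Q i) f i t).
Proof.
move=> hf; elim: r => [|a r IH].
  by under [X in good X]funext do rewrite big_nil; exact: good_cst.
under [X in good X]funext do rewrite big_cons.
case: (boolP (Q a)) => Qa; last by [].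
exact: good_add (hf _ Qa) IH.
Qed.

Lemma good_sqrt (R : realType) (dT : measure_display) (T : measurableType dT) (f : T -> R) :
  good f -> good (fun t => Num.sqrt (f t)).
Proof.
move=> [mf [M hM]]; split.
  apply: measurableT_comp => //; exact: continuous_measurable_fun (@sqrt_continuous R).
exists (1 + M) => t; rewrite ger0_norm ?sqrtr_ge0 //.
have M0 : 0 <= M by apply: le_trans (hM t).
have h1 : f t <= (1 + M) ^+ 2.
  apply: le_trans (ler_norm _) _; apply: le_trans (hM t) _; nra.
apply: le_trans (ler_wsqrtr h1) _; rewrite sqrtr_sqr ger0_norm //; lra.
Qed.

Lemma Rint_add (R : realType) (dT : measure_display) (T : measurableType dT)
  (P : probability T R) (f g : T -> R) : good f -> good g ->
  Rintegral P setT (fun t => f t + g t) = Rintegral P setT f + Rintegral P setT g.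
Proof. by move=> gf gg; apply: RintegralD => //; exact: good_int. Qed.

Lemma Rint_scale (R : realType) (dT : measure_display) (T : measurableType dT)
  (P : probability T R) (c : R) (f : T -> R) : good f ->
  Rintegral P setT (fun t => c * f t) = c * Rintegral P setT f.
Proof. by move=> gf; apply: RintegralZl => //; exact: good_int. Qed.

Lemma Rint_cst (R : realType) (dT : measure_display) (T : measurableType dT)
  (P : probability T R) (c : R) :
  Rintegral P setT (fun t => c) = c.
Proof.
rewrite Rintegral_cst // [X in c * X](_ : _ = 1) ?mulr1 //.
exact: (congr1 fine (probability_setT P)).
Qed.

Lemma Rint_sum (R : realType) (dT : measure_display) (T : measurableType dT)
  (P : probability T R) (I : Type) (r : seq I) (Q : pred I) (f : I -> T -> R) :
  (forall i, Q i -> good (f i)) ->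
  Rintegral P setT (fun t => \sum_(i <- r | Q i) f i t) =
  \sum_(i <- r | Q i) Rintegral P setT (f i).
Proof.
move=> hf; elim: r => [|a r IH].
  by under eq_Rintegral do rewrite big_nil; rewrite big_nil Rint_cst.
under eq_Rintegral do rewrite big_cons; rewrite big_cons.
case: (boolP (Q a)) => Qa; last by [].
rewrite Rint_add ?IH //; [exact: hf | exact: good_sum].
Qed.

Lemma Rint_le (R : realType) (dT : measure_display) (T : measurableType dT)
  (P : probability T R) (f g : T -> R) : good f -> good g -> (forall t, f t <= g t) ->
  Rintegral P setT f <= Rintegral P setT g.
Proof. by move=> gf gg fg; apply: le_Rintegral => //; exact: good_int. Qed.

Lemma sq_expand (R : realType) (a c : R) : (a - c) ^+ 2 = a ^+ 2 + (- (2 * c) * a + c ^+ 2).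
Proof. ring. Qed.

Lemma Rint_var (R : realType) (dT : measure_display) (T : measurableType dT)
  (P : probability T R) (f : T -> R) : good f ->
  (Rintegral P setT f) ^+ 2 <= Rintegral P setT (fun t => f t ^+ 2).
Proof.
move=> gf; set c := Rintegral P setT f.
have g2 : good (fun t => f t ^+ 2).
  by under [X in good X]funext do rewrite expr2; exact: good_mul.
have h0 : 0 <= Rintegral P setT (fun t => (f t - c) ^+ 2).
  by apply: Rintegral_ge0 => t _; exact: sqr_ge0.
have e : Rintegral P setT (fun t => (f t - c) ^+ 2) =
         Rintegral P setT (fun t => f t ^+ 2) - c ^+ 2.
  transitivity (Rintegral P setT (fun t => f t ^+ 2 + ((- (2 * c)) * f t + c ^+ 2))).
    by apply: eq_Rintegral => t _; exact: sq_expand.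
  have g1 : good (fun t => - (2 * c) * f t) by apply: good_mul => //; exact: good_cst.
  rewrite Rint_add //; last by apply: good_add => //; exact: good_cst.
  rewrite Rint_add //; last exact: good_cst.
  rewrite Rint_scale // Rint_cst -/c.
  by move: (Rintegral _ _ _) => u; ring.
by move: h0; rewrite e subr_ge0.
Qed.

Local Open Scope complex_scope.
Local Notation cRe := complex.Re.
Local Notation cIm := complex.Im.

Lemma sum_two (C : zmodType) (n : nat) (i j : 'I_n) (F : 'I_n -> C) : i != j ->
  (forall k, k != i -> k != j -> F k = 0) -> \sum_k F k = F i + F j.
Proof.
move=> ij hF; rewrite (bigD1 i) //= (bigD1 j) /=; last by rewrite eq_sym.
rewrite big1 ?addr0 // => k /andP [ki kj]; exact: hF.
Qed.

Lemma sum_one (C : zmodType) (n : nat) (i : 'I_n) (F : 'I_n -> C) :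
  (forall k, k != i -> F k = 0) -> \sum_k F k = F i.
Proof.
move=> hF; rewrite (bigD1 i) //= big1 ?addr0 // => k ki; exact: hF.
Qed.

Lemma qform (R : realType) (d : nat) (A : 'M[R[i]]_d) (v : 'cV[R[i]]_d) :
  (adjmx v *m A *m v) 0 0 = \sum_k \sum_l (v k 0)^* * A k l * v l 0.
Proof.
rewrite !mxE exchange_big /=; apply: eq_bigr => l _.
rewrite !mxE big_distrl /=; apply: eq_bigr => k _.
by rewrite !mxE.
Qed.

Lemma psd_diag (R : realType) (d : nat) (A : 'M[R[i]]_d) (i : 'I_d) :
  psd A -> 0 <= A i i.
Proof.
move=> hA; have := hA (\col_k (if k == i then 1 else 0)).
rewrite qform (sum_one (i:=i)); last first.
  by move=> k ki; apply: big1 => l _; rewrite !mxE (negbTE ki) /= rmorph0 !mul0r.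
rewrite (sum_one (i:=i)); last by move=> l li; rewrite !mxE (negbTE li) /= mulr0.
by rewrite !mxE eqxx rmorph1 mul1r mulr1.
Qed.

Lemma psd_off (R : realType) (d : nat) (A : 'M[R[i]]_d) (i j : 'I_d) (x y : R[i]) :
  psd A -> i != j ->
  0 <= x^* * A i i * x + x^* * A i j * y + y^* * A j i * x + y^* * A j j * y.
Proof.
move=> hA ij; have := hA (\col_k (if k == i then x else if k == j then y else 0)).
have ji : (j == i) = false by rewrite eq_sym (negbTE ij).
rewrite qform (sum_two ij); last first.
  move=> k ki kj; apply: big1 => l _; rewrite !mxE (negbTE ki) (negbTE kj) /=.
  by rewrite rmorph0 !mul0r.
rewrite (sum_two ij); last by move=> l li lj; rewrite !mxE (negbTE li) (negbTE lj) /= mulr0.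
rewrite (sum_two ij); last by move=> l li lj; rewrite !mxE (negbTE li) (negbTE lj) /= mulr0.
by rewrite !mxE eqxx ji eqxx !addrA.
Qed.

Lemma conjE (R : realType) (x : R[i]) : Num.conj x = conjc x.
Proof. by []. Qed.

Lemma ge0C (R : realType) (a b : R) : (0 <= Complex a b) = (b == 0) && (0 <= a).
Proof. by rewrite lecE /=. Qed.

Lemma psd_herm (R : realType) (d : nat) (A : 'M[R[i]]_d) (i j : 'I_d) :
  psd A -> A j i = conjc (A i j).
Proof.
move=> hA; case: (eqVneq i j) => [<-|ij].
  have := psd_diag i hA; case: (A i i) => p q; rewrite ge0C => /andP [/eqP -> _].
  by rewrite /= oppr0.
have h1 := psd_off 1 1 hA ij; have h2 := psd_off 1 'i hA ij.
have d1 := psd_diag i hA; have d2 := psd_diag j hA.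
move: h1 h2 d1 d2; rewrite !conjE.
case: (A i i) => p q; case: (A i j) => a b; case: (A j i) => c e; case: (A j j) => r s.
simpc => /andP [/eqP h1 _] /andP [/eqP h2 _] /andP [/eqP hq _] /andP [/eqP hs _].
by congr Complex; lra.
Qed.

Lemma cs_real (R : realType) (p r m : R) : 0 <= p -> 0 <= r ->
  (forall l, 0 <= l ^+ 2 * p - 2 * l * m + m * r) ->
  (forall l, 0 <= l ^+ 2 * r - 2 * l * m + m * p) -> m <= p * r.
Proof.
move=> p0 r0 F G.
have F1 := F 1; have Fr := F r; have Gp := G p.
case: (ltrgt0P r) => [rp|rn|r00]; first by nra.
  by lra.
case: (ltrgt0P p) => [pp|pn|p00]; first by nra.
  by lra.
move: F1; rewrite r00 p00; lra.
Qed.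

Lemma psd_cs (R : realType) (d : nat) (A : 'M[R[i]]_d) (i j : 'I_d) :
  psd A -> cRe (A i j) ^+ 2 + cIm (A i j) ^+ 2 <= cRe (A i i) * cRe (A j j).
Proof.
move=> hA; case: (eqVneq i j) => [<-|ij].
  have := psd_diag i hA; case: (A i i) => p q; rewrite ge0C => /andP [/eqP -> _] /=.
  by rewrite /= expr0n addr0 expr2.
have H l := psd_off (Complex l 0) (- (A j i)) hA ij.
have ji : j != i by rewrite eq_sym.
have H' l := psd_off (Complex l 0) (- (A i j)) hA ji.
have ee := psd_herm i j hA.
have di := psd_diag i hA; have dj := psd_diag j hA.
move: H H' di dj; rewrite ee !conjE.
case: (A i i) => p q; case: (A i j) => a b; case: (A j j) => r s.
move=> H H' /andP [/eqP q0 p0] /andP [/eqP s0 r0]; subst q s => /=.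
apply: cs_real => // l; [move: (H l) | move: (H' l)]; simpc => /andP [_ h]; nra.
Qed.

Lemma diagC (R : realType) (d : nat) (A : 'M[R[i]]_d) (i : 'I_d) :
  psd A -> A i i = (cRe (A i i))%:C /\ 0 <= cRe (A i i).
Proof.
move=> hA; have := psd_diag i hA; case: (A i i) => p q; rewrite ge0C.
by case/andP => /eqP -> ->.
Qed.

Lemma tr_re (R : realType) (d : nat) (A : 'M[R[i]]_d) :
  psd A -> \tr A = 1 -> \sum_i cRe (A i i) = 1.
Proof.
move=> hA; rewrite /mxtrace (eq_bigr (fun i => (cRe (A i i))%:C)); last first.
  by move=> i _; case: (diagC i hA).
by rewrite -rmorph_sum => /(congr1 (@complex.Re R)).
Qed.

Lemma diag_le1 (R : realType) (d : nat) (A : 'M[R[i]]_d) (i : 'I_d) :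
  psd A -> \tr A = 1 -> cRe (A i i) <= 1.
Proof.
move=> hA htr; rewrite -(tr_re hA htr) (bigD1 i) //= lerDl.
by apply: sumr_ge0 => k _; case: (diagC k hA).
Qed.

Lemma entry_sq (R : realType) (d : nat) (A : 'M[R[i]]_d) (i j : 'I_d) :
  psd A -> \tr A = 1 -> cRe (A i j) ^+ 2 + cIm (A i j) ^+ 2 <= 1.
Proof.
move=> hA htr; apply: le_trans (psd_cs i j hA) _.
have := diag_le1 i hA htr; have := diag_le1 j hA htr.
case: (diagC i hA) => _; case: (diagC j hA) => _. nra.
Qed.

Lemma entry_re (R : realType) (d : nat) (A : 'M[R[i]]_d) (i j : 'I_d) :
  psd A -> \tr A = 1 -> `|cRe (A i j)| <= 1.
Proof.
move=> hA htr; have := entry_sq i j hA htr.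
move: (cRe _) (cIm _) => u v h; rewrite ler_norml; apply/andP; split; nra.
Qed.

Lemma entry_im (R : realType) (d : nat) (A : 'M[R[i]]_d) (i j : 'I_d) :
  psd A -> \tr A = 1 -> `|cIm (A i j)| <= 1.
Proof.
move=> hA htr; have := entry_sq i j hA htr.
move: (cRe _) (cIm _) => u v h; rewrite ler_norml; apply/andP; split; nra.
Qed.

Lemma entry_prod (R : realType) (d : nat) (A : 'M[R[i]]_d) (i k : 'I_d) :
  psd A -> A i k * A k i = (cRe (A i k) ^+ 2 + cIm (A i k) ^+ 2)%:C.
Proof.
move=> hA; rewrite (psd_herm i k hA); case: (A i k) => a b; simpc.
by congr Complex; rewrite /= ?expr2; ring.
Qed.

Lemma tr_sq (R : realType) (d : nat) (A : 'M[R[i]]_d) :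
  psd A -> \tr (A *m A) = (\sum_i \sum_k (cRe (A i k) ^+ 2 + cIm (A i k) ^+ 2))%:C.
Proof.
move=> hA; rewrite /mxtrace rmorph_sum; apply: eq_bigr => i _.
rewrite mxE rmorph_sum; apply: eq_bigr => k _; exact: entry_prod.
Qed.

Lemma p_le1 (R : realType) (d : nat) (A : 'M[R[i]]_d) :
  psd A -> \tr A = 1 -> \sum_i \sum_k (cRe (A i k) ^+ 2 + cIm (A i k) ^+ 2) <= 1.
Proof.
move=> hA htr; have e := tr_re hA htr.
apply: (@le_trans _ _ (\sum_i \sum_k cRe (A i i) * cRe (A k k))).
  apply: ler_sum => i _; apply: ler_sum => k _; exact: psd_cs.
rewrite (eq_bigr (fun i => cRe (A i i) * \sum_k cRe (A k k))); last first.
  by move=> i _; rewrite mulr_sumr.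
by rewrite -mulr_suml e mulr1.
Qed.


Lemma cs_sum (R : realType) (d : nat) (x : 'I_d -> R) : (0 < d)%N ->
  \sum_i x i = 1 -> (d%:R)^-1 <= \sum_i x i ^+ 2.
Proof.
move=> d0 hs; set c := (d%:R : R)^-1.
have dR : (d%:R : R) != 0 by rewrite pnatr_eq0 -lt0n.
have h := @sumr_ge0 R _ (index_enum 'I_d) xpredT (fun i => (x i - c) ^+ 2) (fun i _ => sqr_ge0 _).
have e : \sum_i (x i - c) ^+ 2 = \sum_i x i ^+ 2 + (- (2 * c)) * \sum_i x i + c ^+ 2 *+ d.
  rewrite mulr_sumr [c ^+ 2 *+ d](_ : _ = \sum_(i < d) c ^+ 2); last by rewrite sumr_const card_ord.
  rewrite -!big_split /=.
  by apply: eq_bigr => i _; rewrite sq_expand addrA.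
move: h; rewrite e hs mulr1.
have -> : c ^+ 2 *+ d = c by rewrite -mulr_natr expr2 -mulrA mulVf // mulr1.
move=> h; lra.
Qed.

Lemma amgm2 (R : realType) (v u : R) : 0 <= v -> 0 <= u ->
  2 * (Num.sqrt v * Num.sqrt u) <= v + u.
Proof.
move=> v0 u0; have hv := sqr_sqrtr v0; have hu := sqr_sqrtr u0.
have key : 2 * (Num.sqrt v * Num.sqrt u) <= Num.sqrt v ^+ 2 + Num.sqrt u ^+ 2.
  by move: (Num.sqrt v) (Num.sqrt u) => a b; have := sqr_ge0 (a - b); rewrite sqrrB; lra.
by rewrite hv hu in key.
Qed.

Lemma final_real (R : realType) (D a M E : R) : 2 <= D -> D^-1 <= M -> M <= E ->
  a ^+ 2 <= 1 - E ->
  1 - 4^-1 * (E - M) = 1 \/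
  D^-1 * (1 + Num.sqrt (D - 1) * Num.sqrt (D * (a ^+ 2 + M) - 1)) < 1 - 4^-1 * (E - M).
Proof.
move=> D2 DM ME aE.
set x := a ^+ 2 + M.
have D0 : 0 < D by lra.
have a0 : 0 <= a ^+ 2 := sqr_ge0 a.
have x1 : x <= 1 by rewrite /x; lra.
have u0 : 0 <= D * x - 1.
  have : D * D^-1 <= D * M by rewrite ler_pM2l.
  rewrite mulfV ?lt0r_neq0 // => h1.
  rewrite /x; nra.
have [xe|xl] := eqVneq x 1.
  left; have -> : E - M = 0 by move: xe; rewrite /x; lra.
  by rewrite mulr0 subr0.
right.
have xlt : x < 1 by rewrite lt_neqAle xl x1.
set v := D - 1; set u := D * x - 1.
have v0 : 0 <= v by rewrite /v; lra.
have amgm : 2 * (Num.sqrt v * Num.sqrt u) <= v + u.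
  exact: amgm2.
have b2 : D^-1 * (1 + Num.sqrt v * Num.sqrt u) <= (1 + x) / 2.
  have -> : (1 + x) / 2 = D^-1 * (D * ((1 + x) / 2)) by rewrite mulKf // lt0r_neq0.
  rewrite ler_pM2l ?invr_gt0 //.
  move: amgm; rewrite /u /v; lra.
apply: le_lt_trans b2 _.
have : E - M <= 1 - x by rewrite /x; lra.
lra.
Qed.

Lemma sqrtC_R (R : realType) (r : R) : 0 <= r -> sqrtC (r%:C) = (Num.sqrt r)%:C.
Proof.
move=> r0; rewrite -[in LHS](sqr_sqrtr r0) rmorphXn sqrCK //.
by rewrite lecR sqrtr_ge0.
Qed.

Lemma Ec_R (R : realType) (dT : measure_display) (T : measurableType dT)
  (P : probability T R) (h : T -> R) :
  Ec P (fun t => (h t)%:C) = (Rintegral P setT h)%:C.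
Proof. by rewrite /Ec /= Rint_cst. Qed.

Unset Implicit Arguments.
Theorem corollary2 (R : realType) (d : nat) (hd : (2 <= d)%N)
  (dT : measure_display) (T : measurableType dT) (P : probability T R)
  (rho : T -> 'M[R[i]]_d)
  (rho_meas : forall i j : 'I_d,
     measurable_fun setT (fun t => complex.Re (rho t i j)) /\
     measurable_fun setT (fun t => complex.Im (rho t i j)))
  (rho_S : forall t, @density_ops R d (rho t)) :
  B1 P rho = 1 \/ B2 P rho < B1 P rho.
Proof.
have hpsd t : psd (rho t) by case: (rho_S t).
have htr t : \tr (rho t) = 1 by case: (rho_S t).
pose re i j t := cRe (rho t i j).
pose im i j t := cIm (rho t i j).
have gre i j : good (re i j).
  by split; [case: (rho_meas i j) | exists 1 => t; exact: entry_re].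
have gim i j : good (im i j).
  by split; [case: (rho_meas i j) | exists 1 => t; exact: entry_im].
have gsq (f : T -> R) : good f -> good (fun t => f t ^+ 2).
  by move=> gf; under [X in good X]funext do rewrite expr2; exact: good_mul.
pose g i t := \sum_k (re i k t ^+ 2 + im i k t ^+ 2).
have gg i : good (g i) by apply: good_sum => k _; apply: good_add; apply: gsq.
pose p t := \sum_i g i t.
have gp : good p by apply: good_sum => i _.
have p1 t : p t <= 1 by exact: p_le1.
pose s t := Num.sqrt (1 - p t).
have gs : good s by apply: good_sqrt; apply: good_add; [exact: good_cst | exact: good_opp].
pose m i j := Rintegral P setT (re i j).
pose n i j := Rintegral P setT (im i j).
have mherm i j : m j i = m i j.
  apply: eq_Rintegral => t _; rewrite /re (psd_herm i j (hpsd t)).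
  by case: (rho t i j).
have nherm i j : n j i = - n i j.
  rewrite /n -mulN1r -Rint_scale //; apply: eq_Rintegral => t _.
  rewrite /im (psd_herm i j (hpsd t)) mulN1r.
  by case: (rho t i j).
pose E := \sum_i Rintegral P setT (g i).
pose M := \sum_i \sum_k (m i k ^+ 2 + n i k ^+ 2).
pose a := Rintegral P setT s.
have trE : \tr (Emx P (fun t => rho t *m rho t)) = E%:C.
  rewrite /mxtrace /E rmorph_sum; apply: eq_bigr => i _; rewrite mxE.
  rewrite (_ : (fun t => (rho t *m rho t) i i) = (fun t => (g i t)%:C)) ?Ec_R //.
  apply: funext => t; rewrite mxE rmorph_sum; apply: eq_bigr => k _.
  exact: entry_prod.
have em i j : Emx P rho i j = Complex (m i j) (n i j) by rewrite mxE.
have trM : \tr (Emx P rho *m Emx P rho) = M%:C.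
  rewrite /mxtrace /M rmorph_sum; apply: eq_bigr => i _; rewrite mxE.
  rewrite rmorph_sum; apply: eq_bigr => k _.
  rewrite !em mherm nherm; simpc.
  by congr Complex; rewrite /= ?expr2; ring.
have Ea : Ec P (fun t => sqrtC (1 - \tr (rho t *m rho t))) = a%:C.
  rewrite (_ : (fun t => sqrtC (1 - \tr (rho t *m rho t))) = (fun t => (s t)%:C)) ?Ec_R //.
  apply: funext => t; rewrite tr_sq // -(rmorph1 (real_complex R)) -rmorphB sqrtC_R //.
  by rewrite subr_ge0; exact: p1.
have ME : M <= E.
  apply: ler_sum => i _; rewrite Rint_sum; last by move=> k _; apply: good_add; apply: gsq.
  apply: ler_sum => k _; rewrite Rint_add; try exact: gsq.
  by apply: lerD; apply: Rint_var.
have aE : a ^+ 2 <= 1 - E.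
  apply: le_trans (Rint_var P gs) _.
  have -> : Rintegral P setT (fun t => s t ^+ 2) = Rintegral P setT (fun t => 1 + - p t).
    by apply: eq_Rintegral => t _; rewrite /s sqr_sqrtr // subr_ge0; exact: p1.
  rewrite Rint_add; [|exact: good_cst|exact: good_opp].
  rewrite Rint_cst.
  have -> : Rintegral P setT (fun t => - p t) = - 1 * Rintegral P setT p.
    by rewrite -Rint_scale //; apply: eq_Rintegral => t _; rewrite mulN1r.
  by rewrite mulN1r /E /p Rint_sum.
have DM : (d%:R : R)^-1 <= M.
  have hs : \sum_i m i i = 1.
    rewrite /m -Rint_sum // -[RHS](Rint_cst P 1); apply: eq_Rintegral => t _.
    exact: tr_re.
  have hd0 : (0 < d)%N by exact: leq_trans hd.
  apply: le_trans (cs_sum hd0 hs) _.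
  apply: ler_sum => i _; rewrite (bigD1 i) //= -[X in X <= _]addr0.
  apply: lerD; first by rewrite lerDl sqr_ge0.
  by apply: sumr_ge0 => k _; apply: addr_ge0; apply: sqr_ge0.
have D2 : (2 : R) <= d%:R by rewrite (ler_nat R 2 d).
have D0 : (0 : R) < d%:R by lra.
have u0 : 0 <= d%:R * (a ^+ 2 + M) - 1.
  have : d%:R * (d%:R)^-1 <= d%:R * M :> R by rewrite ler_pM2l.
  rewrite mulfV ?lt0r_neq0 // => h1; have := sqr_ge0 a; nra.
have v0 : (0 : R) <= d%:R - 1 by lra.
have hB1 : B1 P rho = (1 - 4^-1 * (E - M))%:C.
  rewrite /B1 linearB /= trE trM.
  rewrite !rmorphB rmorph1 rmorphM fmorphV rmorph_nat.
  by rewrite (rmorphB (real_complex R)).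
have hB2 : B2 P rho = ((d%:R)^-1 * (1 + Num.sqrt (d%:R - 1) * Num.sqrt (d%:R * (a ^+ 2 + M) - 1)))%:C.
  have e1 : ((d.-1)%:R : R[i]) = ((d%:R - 1 : R))%:C.
    rewrite rmorphB rmorph1 rmorph_nat -subn1 natrB //; exact: leq_trans hd.
  have e2 : (d%:R : R[i]) * (a%:C ^+ 2 + M%:C) - 1 = ((d%:R * (a ^+ 2 + M) - 1 : R))%:C.
    by rewrite rmorphB rmorphM rmorphD rmorphXn rmorph_nat rmorph1.
  rewrite /B2 Ea trM e1 e2 !sqrtC_R //.
  by rewrite rmorphM rmorphD rmorph1 rmorphM fmorphV rmorph_nat.
rewrite hB1 hB2; case: (final_real D2 DM ME aE) => [->|h]; first by left.
by right; rewrite ltcR.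
Qed.
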